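(* Let $\{X_m\}$ be nonnegative random variables and $b_m>0$ with $b_m\to\infty$. (a) Suppose there are $p>1$ and $C_0>0$ such that for every $\beta>0$, $\limsup_{m\to\infty}b_m^{-1}\log\mathbb{E}\exp\{\beta X_m\}\le C_0\beta^p$ and $\liminf_{m\to\infty}b_m^{-1}\log\mathbb{E}\exp\{\beta b_m^{1/2}X_m^{1/2}\}\ge\frac{p+1}{p}(pC_0)^{1/(p+1)}(\beta/2)^{2p/(p+1)}$. Then $\lim_{m\to\infty}b_m^{-1}\log\mathbb{E}\exp\{\beta X_m\}=C_0\beta^p$ for all $\beta>0$. (b) The same conclusion holds if instead, for every $\beta>0$, $\limsup_{m\to\infty}b_m^{-1}\log\mathbb{E}\exp\{\beta X_m\}<\infty$ and $\lim_{m\to\infty}b_m^{-1}\log\mathbb{E}\exp\{\beta b_m^{1/2}X_m^{1/2}\}=\frac{p+1}{p}(pC_0)^{1/(p+1)}(\beta/2)^{2p/(p+1)}$, for some $p>1$, $C_0>0$. *)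

(* Defs.v *)
From HB Require Import structures.
From mathcomp Require Import all_boot all_order all_algebra.
From mathcomp Require Import all_classical all_reals all_analysis.
Set Implicit Arguments. Unset Strict Implicit. Unset Printing Implicit Defensive.
Import Order.TTheory GRing.Theory Num.Theory.
Import numFieldNormedType.Exports.
Local Open Scope classical_set_scope.
Local Open Scope ring_scope.
Local Open Scope ereal_scope.

Definition eln {R : realType} (x : \bar R) : \bar R :=
  match x with
  | r%:E => (ln r)%:E
  | +oo => +oo
  | -oo => -oo
  end.

Definition Eexp {d} {T : measurableType d} {R : realType}
  (P : probability T R) (Y : T -> R) : \bar R :=
  \int[P]_x (expR (Y x))%:E.

Definition scaled_log_mgf {d} {T : measurableType d} {R : realType}
  (P : probability T R) (b : nat -> R) (Y : nat -> T -> R) (m : nat) : \bar R :=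
  ((b m)^-1)%:E * eln (Eexp P (Y m)).

(* Main.v *)
Require Import Defs.
From HB Require Import structures.
From mathcomp Require Import all_boot all_order all_algebra.
From mathcomp Require Import all_classical all_reals all_analysis.
From mathcomp Require Import measurable_realfun.
From mathcomp Require Import lra ring.
Import Order.TTheory GRing.Theory Num.Theory.
Import numFieldNormedType.Exports.
Local Open Scope classical_set_scope.
Local Open Scope ring_scope.

Lemma amgm {R : realType} (q x : R) : 0 < q < 1 -> 0 < x ->
  x `^ q <= q * x + (1 - q).
Proof.
move=> /andP[q0 q1] x0.
rewrite /powR gt_eqF //.
set t := ln x.
have xE : x = expR t by rewrite /t lnK // posrE.
rewrite [in q * x]xE.
have h1 := expR_ge1Dx ((1-q)*t).
have h2 := expR_ge1Dx (-(q*t)).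
have h3 : 1 <= q * expR((1-q)*t) + (1-q)*expR(-(q*t)) by nra.
have e1 : expR ((1-q)*t) * expR (t * q) = expR t by rewrite -expRD; congr expR; ring.
have e2 : expR (-(q*t)) * expR (t * q) = 1 by rewrite -expRD -expR0; congr expR; ring.
have ep := expR_gt0 (t * q).
have := ler_wpM2l (ltW ep) h3.
have -> : expR (t * q) * (q * expR ((1 - q) * t) + (1 - q) * expR (- (q * t)))
  = q * (expR ((1-q)*t) * expR (t * q)) + (1-q) * (expR (- (q * t)) * expR (t * q)) by ring.
by rewrite e1 e2 !mulr1 mulrC.
Qed.

Lemma powRS (R : realType) (t p : R) : 0 < t -> t `^ (p + 1) = t `^ p * t.
Proof. by move=> t0; rewrite powRD ?powRr1 ?ltW// (gt_eqF t0) implybT. Qed.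

Lemma rate_eq (R : realType) (p C0 th a : R) : 1 < p -> 0 < C0 -> 0 < th -> 0 < a ->
  (p + 1) / p * (p * C0) `^ (1 / (p + 1)) * (a / 2) `^ (2 * p / (p + 1))
  = (p + 1) * C0 * th `^ p * (((a/2)^+2) / (p * C0 * th `^ (p+1))) `^ (p / (p+1)).
Proof.
move=> p1 C00 th0 a0.
have p0 : 0 < p by lra.
have p10 : 0 < p + 1 by lra.
set q := p / (p + 1).
have -> : 2 * p / (p + 1) = 2 * q by rewrite /q mulrA.
rewrite powRrM powR_mulrn; last by rewrite divr_ge0 // ltW.
set u := (a / 2) ^+ 2.
have ug0 : 0 < u by rewrite /u exprn_gt0 // divr_gt0.
set u0 := p * C0 * th `^ (p + 1).
have u00 : 0 < u0 by rewrite /u0 !mulr_gt0 // powR_gt0.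
have -> : u `^ q = (u / u0) `^ q * u0 `^ q.
  by rewrite -powRM ?divr_ge0 ?ltW // mulrVK // unitfE gt_eqF.
have -> : u0 `^ q = (p * C0) `^ q * th `^ p.
  rewrite /u0 powRM ?mulr_ge0 ?powR_ge0 ?ltW //; congr (_ * _).
  by rewrite -powRrM; congr (_ `^ _); rewrite /q; field; rewrite gt_eqF.
have -> : (p * C0) `^ (1 / (p + 1)) = (p * C0) `^ (1 - q).
  by congr (_ `^ _); rewrite /q; field; rewrite gt_eqF.
have E : (p * C0) `^ (1 - q) * (p * C0) `^ q = p * C0.
  by rewrite -powRD ?subrK ?powRr1 ?mulr_ge0 ?ltW // oner_eq0.
move: E; set A := (p * C0) `^ (1 - q); set B := (p * C0) `^ q.
set Y := (u / u0) `^ q; set Z := th `^ p => E.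
apply: etrans (_ : _ = (p + 1) / p * (A * B) * Z * Y) _; first by ring.
rewrite E; field; rewrite gt_eqF //.
Qed.

Lemma rate_le (R : realType) (p C0 th a : R) : 1 < p -> 0 < C0 -> 0 < th -> 0 < a ->
  (p + 1) / p * (p * C0) `^ (1 / (p + 1)) * (a / 2) `^ (2 * p / (p + 1))
  <= C0 * th `^ p + a ^+ 2 / (4 * th).
Proof.
move=> p1 C00 th0 a0; rewrite (@rate_eq _ _ _ th) //.
have p0 : 0 < p by lra.
have p10 : 0 < p + 1 by lra.
have tp0 : 0 < th `^ p by rewrite powR_gt0.
have q01 : 0 < p / (p + 1) < 1.
  by rewrite divr_gt0 //= ltr_pdivrMr // mul1r; lra.
have x0 : 0 < (a / 2) ^+ 2 / (p * C0 * th `^ (p + 1)).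
  by rewrite divr_gt0 ?exprn_gt0 ?divr_gt0 // !mulr_gt0 // powR_gt0.
have := @amgm _ _ _ q01 x0.
move=> /(ler_wpM2l (_ : 0 <= (p + 1) * C0 * th `^ p)) h.
apply: le_trans (h _) _; first by rewrite !mulr_ge0 ?ltW.
rewrite powRS // le_eqVlt; apply/orP; left; apply/eqP.
by field; rewrite !gt_eqF.
Qed.

Lemma rate_opt (R : realType) (p C0 th : R) : 1 < p -> 0 < C0 -> 0 < th ->
  let a := 2 * Num.sqrt (p * C0 * th `^ (p + 1)) in
  0 < a /\
  (p + 1) / p * (p * C0) `^ (1 / (p + 1)) * (a / 2) `^ (2 * p / (p + 1))
  = C0 * th `^ p + a ^+ 2 / (4 * th).
Proof.
move=> p1 C00 th0 a.
have p0 : 0 < p by lra.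
have u00 : 0 < p * C0 * th `^ (p + 1) by rewrite !mulr_gt0 // powR_gt0.
have a0 : 0 < a by rewrite /a mulr_gt0 // sqrtr_gt0.
split => //; rewrite (@rate_eq _ _ _ th) //.
have -> : (a / 2) ^+ 2 = p * C0 * th `^ (p + 1).
  by rewrite /a mulrC mulKf // sqr_sqrtr // ltW.
rewrite divff ?gt_eqF // powR1.
have -> : a ^+ 2 = 4 * (p * C0 * th `^ (p + 1)).
  by rewrite /a exprMn sqr_sqrtr ?ltW //; ring.
rewrite powRS //; field; rewrite gt_eqF //.
Qed.

Lemma grid_step (R : realType) (th h be s : R) (i : nat) : 0 < th -> 0 < h -> 0 < be ->
  i%:R * h * be <= s -> s <= (i%:R + 1) * h * be ->
  th * s ^+ 2 <= - (be ^+ 2 * (th * i%:R * (i%:R + 1) * h ^+ 2)) + th * (2 * i%:R + 1) * h * be * s.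
Proof.
move=> th0 h0 be0 h1 h2.
have : 0 <= th * ((s - i%:R * h * be) * ((i%:R + 1) * h * be - s)).
  by apply: mulr_ge0; [exact: ltW | apply: mulr_ge0; rewrite subr_ge0].
have -> : th * ((s - i%:R * h * be) * ((i%:R + 1) * h * be - s)) =
  (- (be ^+ 2 * (th * i%:R * (i%:R + 1) * h ^+ 2)) + th * (2 * i%:R + 1) * h * be * s)
  - th * s ^+ 2 by ring.
by rewrite subr_ge0.
Qed.

Lemma grid (R : realType) (th h be s : R) (N : nat) : 0 < th -> 0 < h -> 0 < be ->
  0 <= s -> s <= N.+1%:R * h * be ->
  expR (th * s ^+ 2) <= \sum_(i < N.+1)
    expR (- (be ^+ 2 * (th * i%:R * (i%:R + 1) * h ^+ 2)) + th * (2 * i%:R + 1) * h * be * s).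
Proof.
move=> th0 h0 be0 s0; elim: N => [|N IH] hs.
  rewrite big_ord1 ler_expR.
  apply: (@grid_step _ _ _ _ _ 0) => //; first by rewrite !mul0r.
  by rewrite add0r; move: hs; rewrite mul1r.
rewrite big_ord_recr /=.
have [sN|Ns] := lerP s (N.+1%:R * h * be).
  apply: le_trans (IH sN) _; rewrite lerDl expR_ge0 //.
apply: le_trans (_ : _ <= expR (- (be ^+ 2 * (th * N.+1%:R * (N.+1%:R + 1) * h ^+ 2)) +
   th * (2 * N.+1%:R + 1) * h * be * s)) _.
  rewrite ler_expR; apply: grid_step => //; first exact: ltW.
  by rewrite natr1.
apply: ler_wpDl; [apply: sumr_ge0 => i _; exact: expR_ge0 | exact: lexx].
Qed.

Lemma pointwise (R : realType) (th h be s : R) (N : nat) : 0 < th -> 0 < h -> 0 < be ->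
  0 <= s ->
  expR (th * s ^+ 2) <= \sum_(i < N.+1)
    expR (- (be ^+ 2 * (th * i%:R * (i%:R + 1) * h ^+ 2)) + th * (2 * i%:R + 1) * h * be * s)
  + expR (- (be ^+ 2 * (th * (N.+1%:R * h) ^+ 2)) + 2 * th * s ^+ 2).
Proof.
move=> th0 h0 be0 s0.
have [sN|Ns] := lerP s (N.+1%:R * h * be).
  by apply: le_trans (@grid _ _ _ _ _ _ th0 h0 be0 s0 sN) _; rewrite lerDl expR_ge0.
apply: le_trans (_ : _ <= expR (- (be ^+ 2 * (th * (N.+1%:R * h) ^+ 2)) + 2 * th * s ^+ 2)) _.
  rewrite ler_expR.
  have Nh0 : 0 <= N.+1%:R * h * be by rewrite !mulr_ge0 ?ltW.
  have : (N.+1%:R * h * be) ^+ 2 <= s ^+ 2 by rewrite ler_sqr ?ltW // ?nnegrE (le_trans Nh0 (ltW Ns)).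
  have -> : be ^+ 2 * (th * (N.+1%:R * h) ^+ 2) = th * (N.+1%:R * h * be) ^+ 2 by ring.
  move=> h2; have := ler_wpM2l (ltW th0) h2; lra.
rewrite lerDr; apply: sumr_ge0 => i _; exact: expR_ge0.
Qed.

Local Open Scope ereal_scope.

Lemma einf_le {R : realType} (u v : (\bar R)^nat) :
  (forall n, u n <= v n) -> limn_einf u <= limn_einf v.
Proof.
move=> uv; rewrite !limn_einf_lim; apply: lee_lim; [exact: is_cvg_einfs..|].
apply: nearW => n /=; apply: le_ereal_inf_tmp => _ [k /= nk <-].
apply: le_trans (uv k); apply: ereal_inf_lbound; by exists k.
Qed.

Lemma esup_le_near {R : realType} (u : (\bar R)^nat) (r : \bar R) :
  (\forall n \near \oo, u n <= r) -> limn_esup u <= r.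
Proof.
move=> [N _ HN]; rewrite limn_esup_lim; apply: lime_le; first exact: is_cvg_esups.
near=> n; apply: ge_ereal_sup => _ [k /= nk <-]; apply: HN => /=.
by apply: leq_trans nk; near: n; exists N.
Unshelve. all: by end_near. Qed.

Lemma cvg_einf_esup {R : realType} (u : (\bar R)^nat) (l : \bar R) :
  l <= limn_einf u -> limn_esup u <= l -> u @ \oo --> l.
Proof.
move=> h1 h2.
have e1 : limn (einfs u) = l.
  apply/eqP; rewrite eq_le -limn_einf_lim h1 andbT.
  by apply: le_trans (limn_einf_sup u) h2.
have e2 : limn (esups u) = l.
  apply/eqP; rewrite eq_le -limn_esup_lim h2 /=.
  by apply: le_trans h1 (limn_einf_sup u).
apply: (@squeeze_cvge _ _ _ _ (einfs u) _ (esups u)).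
- apply: nearW => n; apply/andP; split.
  + by apply: ereal_inf_lbound; exists n => /=.
  + by apply: ereal_sup_ubound; exists n => /=.
- by rewrite -e1; exact: is_cvg_einfs.
- by rewrite -e2; exact: is_cvg_esups.
Qed.

Lemma scaled_le {R : realType} (E1 E2 : \bar R) (b c : R) : (0 < b)%R ->
  1 <= E1 -> 1 <= E2 -> E1 <= (expR (b * c))%:E * E2 ->
  (b^-1)%:E * eln E1 <= c%:E + (b^-1)%:E * eln E2.
Proof.
move=> b0 h1 h2 h12.
have bi0 : (0 < b^-1)%R by rewrite invr_gt0.
case: E2 h2 h12 => [r| |] h2 h12; last 2 first.
- by rewrite /= gt0_muley ?lte_fin // addey ?leey.
- by move: h2; rewrite leeNy_eq.
case: E1 h1 h12 => [s| |] h1 h12; last 2 first.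
- by move: h12; rewrite leye_eq -EFinM.
- by move: h1; rewrite leeNy_eq.
rewrite /= -EFinM -EFinM -EFinD lee_fin.
rewrite lee_fin in h1; rewrite lee_fin in h2; rewrite -EFinM lee_fin in h12.
have r0 : (0 < r)%R by lra.
have s0 : (0 < s)%R by lra.
have : (ln s <= b * c + ln r)%R.
  rewrite -[X in (_ <= X + _)%R]expRK -lnM ?posrE ?expR_gt0 //.
  by rewrite ler_ln ?posrE ?mulr_gt0 ?expR_gt0.
move=> h; have := ler_wpM2l (ltW bi0) h.
by rewrite mulrDr mulrA mulVf ?gt_eqF // mul1r.
Qed.

Lemma scaled_ge {R : realType} (E : \bar R) (b r : R) : (0 < b)%R ->
  1 <= E -> (b^-1)%:E * eln E <= r%:E -> E <= (expR (b * r))%:E.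
Proof.
move=> b0 h1 h.
have bi0 : (0 < b^-1)%R by rewrite invr_gt0.
case: E h1 h => [s| |] h1 h; last 2 first.
- by rewrite /= gt0_muley ?lte_fin // in h.
- by move: h1; rewrite leeNy_eq.
rewrite /= -EFinM lee_fin in h; rewrite lee_fin in h1; rewrite lee_fin.
have s0 : (0 < s)%R by lra.
rewrite -(lnK s0) ler_expR.
have := ler_wpM2l (ltW b0) h.
by rewrite mulrA mulfV ?gt_eqF // mul1r.
Qed.

Lemma mexp {d} {T : measurableType d} {R : realType} (Y : T -> R) :
  measurable_fun setT Y -> measurable_fun setT (fun x => (expR (Y x))%:E).
Proof.
move=> mY; apply/measurable_EFinP; exact: (measurableT_comp (@measurable_expR R) mY).
Qed.

Lemma Eexp_ge1 {d} {T : measurableType d} {R : realType} (P : probability T R)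
  (Y : T -> R) : measurable_fun setT Y -> (forall x, (0 <= Y x)%R) -> 1 <= Eexp P Y.
Proof.
move=> mY Y0; rewrite /Eexp.
have -> : (1 : \bar R) = \int[P]_x (cst 1%:E) x.
  by rewrite integral_cst // mul1e; apply/esym; apply: probability_setT.
apply: (ge0_le_integral P measurableT) => //; first by apply: mexp.
by move=> x _; rewrite lee_fin /= -expR0 ler_expR.
Qed.

Lemma Eexp_le {d} {T : measurableType d} {R : realType} (P : probability T R)
  (Y Z : T -> R) (c : R) : measurable_fun setT Y -> measurable_fun setT Z ->
  (forall x, (Y x <= c + Z x)%R) -> Eexp P Y <= (expR c)%:E * Eexp P Z.
Proof.
move=> mY mZ YZ; rewrite /Eexp -ge0_integralZl //; last by apply: mexp.
apply: (ge0_le_integral P measurableT) => //.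
- by apply: mexp.
- apply: measurable_funeM; by apply: mexp.
- by move=> x _; rewrite -EFinM lee_fin -expRD ler_expR.
Qed.

Lemma Eexp_sum_le {d} {T : measurableType d} {R : realType} (P : probability T R)
  (N : nat) (Y W : T -> R) (Z : 'I_N -> T -> R) (a : 'I_N -> R) (c : R) :
  measurable_fun setT Y -> measurable_fun setT W -> (forall i, measurable_fun setT (Z i)) ->
  (forall x, (expR (Y x) <= \sum_(i < N) expR (a i + Z i x) + expR (c + W x))%R) ->
  Eexp P Y <= \sum_(i < N) (expR (a i))%:E * Eexp P (Z i) + (expR c)%:E * Eexp P W.
Proof.
move=> mY mW mZ H; rewrite /Eexp.
have mF i : measurable_fun setT (fun x => (expR (a i + Z i x))%:E).
  by apply: mexp; apply: measurable_funD => //; exact: measurable_cst.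
have mG : measurable_fun setT (fun x => (expR (c + W x))%:E).
  by apply: mexp; apply: measurable_funD => //; exact: measurable_cst.
apply: le_trans (_ : _ <= \int[P]_x (\sum_(i < N) (expR (a i + Z i x))%:E
   + (expR (c + W x))%:E)) _.
  apply: (ge0_le_integral P measurableT) => //.
  - by apply: mexp.
  - apply: emeasurable_funD => //; exact: emeasurable_sum.
  - by move=> x _; rewrite sumEFin -EFinD lee_fin.
rewrite ge0_integralD //; last 2 first.
- by move=> x _; apply: sume_ge0 => i _; rewrite lee_fin expR_ge0.
- exact: emeasurable_sum.
rewrite ge0_integral_sum //.
apply: leeD.
  apply: lee_sum => i _; rewrite -ge0_integralZl //; last by apply: mexp; exact: mZ.
  by rewrite le_eqVlt; apply/orP; left; apply/eqP; apply: eq_integral => x _; rewrite -EFinM expRD.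
rewrite -ge0_integralZl //; last by apply: mexp.
by rewrite le_eqVlt; apply/orP; left; apply/eqP; apply: eq_integral => x _; rewrite -EFinM expRD.
Qed.

Lemma cvg_near_le {R : realType} (u : (\bar R)^nat) (l e : R) :
  u @ \oo --> l%:E -> (0 < e)%R -> \forall n \near \oo, u n <= (l + e)%:E.
Proof.
move=> /fine_cvgP[ufin ul] e0.
have := @cvgr_le _ _ _ _ _ _ ul (l + e)%R; rewrite ltrDl e0 => /(_ _ isT) hle.
near=> n; have /fineK <- : u n \is a fin_num by near: n.
by rewrite lee_fin; near: n.
Unshelve. all: by end_near. Qed.

Lemma esup_fin {R : realType} (u : (\bar R)^nat) :
  limn_esup u < +oo -> exists M : R, \forall n \near \oo, u n <= M%:E.
Proof.
rewrite /limn_esup /limf_esup => /ereal_inf_lt[_ [V FV <-] hV].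
exists (fine (ereal_sup (u @` V))); move: FV; apply: filterS => n Vn.
have un : u n <= ereal_sup (u @` V) by apply: ereal_sup_ubound; exists n.
move: hV un; case: (ereal_sup (u @` V)) => [r| |] //= _.
by rewrite leeNy_eq => /eqP ->; rewrite leNye.
Qed.

Local Close Scope ereal_scope.

Lemma young (R : realType) (th u v : R) : 0 < th ->
  u * v <= u ^+ 2 / (4 * th) + th * v ^+ 2.
Proof.
move=> th0.
have : 0 <= (u - 2 * th * v) ^+ 2 / (4 * th) by rewrite divr_ge0 ?sqr_ge0 // mulr_ge0 // ltW.
have -> : (u - 2 * th * v) ^+ 2 / (4 * th) = u ^+ 2 / (4 * th) + th * v ^+ 2 - u * v.
  by field; rewrite gt_eqF.
by rewrite subr_ge0.
Qed.

Theorem lemmaA2 (d : measure_display) (T : measurableType d) (R : realType)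
  (P : probability T R) (X : nat -> T -> R) (b : nat -> R) (p C0 : R)
  (mX : forall m, measurable_fun setT (X m))
  (X_ge0 : forall m x, 0 <= X m x)
  (b_gt0 : forall m, 0 < b m)
  (b_oo : b @ \oo --> +oo)
  (hp : 1 < p) (hC0 : 0 < C0) :
  let L (beta : R) := scaled_log_mgf P b (fun m x => beta * X m x) in
  let Lsq (beta : R) :=
    scaled_log_mgf P b (fun m x => beta * Num.sqrt (b m) * Num.sqrt (X m x)) in
  let rate (beta : R) :=
    (p + 1) / p * (p * C0) `^ (1 / (p + 1)) * (beta / 2) `^ (2 * p / (p + 1)) in
  ((forall beta, 0 < beta -> (limn_esup (L beta) <= (C0 * beta `^ p)%:E)%E) ->
   (forall beta, 0 < beta -> ((rate beta)%:E <= limn_einf (Lsq beta))%E) ->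
   forall beta, 0 < beta -> L beta @ \oo --> (C0 * beta `^ p)%:E)
  /\
  ((forall beta, 0 < beta -> (limn_esup (L beta) < +oo)%E) ->
   (forall beta, 0 < beta -> Lsq beta @ \oo --> (rate beta)%:E) ->
   forall beta, 0 < beta -> L beta @ \oo --> (C0 * beta `^ p)%:E).
Proof.
move=> L Lsq rate.
have mL beta m : measurable_fun setT (fun x => beta * X m x).
  by apply: measurable_funM => //; exact: measurable_cst.
have mLsq beta m : measurable_fun setT (fun x => beta * Num.sqrt (b m) * Num.sqrt (X m x)).
  apply: measurable_funM; first exact: measurable_cst.
  exact: (measurableT_comp (continuous_measurable_fun (@sqrt_continuous R)) (mX m)).
have EL1 beta m : 0 <= beta -> (1 <= Eexp P (fun x => beta * X m x)%R)%E.
  by move=> b0; apply: Eexp_ge1 => // x; exact: mulr_ge0.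
have ELsq1 beta m : 0 <= beta ->
    (1 <= Eexp P (fun x => beta * Num.sqrt (b m) * Num.sqrt (X m x))%R)%E.
  by move=> b0; apply: Eexp_ge1 => // x; rewrite !mulr_ge0 ?sqrtr_ge0.
have lower : (forall beta, 0 < beta -> ((rate beta)%:E <= limn_einf (Lsq beta))%E) ->
    forall th, 0 < th -> ((C0 * th `^ p)%:E <= limn_einf (L th))%E.
  move=> H th th0.
  have [a0 ra] := @rate_opt _ _ _ _ hp hC0 th0.
  move: a0 ra; set a := 2 * Num.sqrt _ => a0 ra.
  set c := a ^+ 2 / (4 * th).
  have pw m : (Lsq a m <= c%:E + L th m)%E.
    rewrite /Lsq /L /scaled_log_mgf; apply: scaled_le => //.
    - exact: ELsq1 (ltW a0).
    - exact: EL1 (ltW th0).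
    apply: Eexp_le => // x.
    have := @young _ _ (a * Num.sqrt (b m)) (Num.sqrt (X m x)) th0.
    by rewrite exprMn !sqr_sqrtr ?(ltW (b_gt0 m)) // /c mulrA [b m * _]mulrC.
  have := @einf_le _ (Lsq a) (fun m => c%:E + L th m)%E pw; rewrite limn_einf_shift //.
  have := H a a0; rewrite /rate ra EFinD addeC => h1 h2.
  by have := le_trans h1 h2; rewrite leeD2lE.
split.
  move=> Hsup Hinf th th0; apply: cvg_einf_esup; [exact: lower | exact: Hsup].
move=> Hsup Hcvg th th0; apply: cvg_einf_esup.
  apply: lower => // beta b0; have [-> _] := cvg_limn_einf_sup (Hcvg beta b0).
  exact: lexx.
apply/lee_addgt0Pr => e3 e30.
set e := e3 / 3.
have e0 : 0 < e by rewrite divr_gt0.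
set h := 2 * Num.sqrt (e / th).
have h0 : 0 < h by rewrite mulr_gt0 // sqrtr_gt0 divr_gt0.
have h2 : th * h ^+ 2 = 4 * e.
  by rewrite /h exprMn sqr_sqrtr ?divr_ge0 ?ltW //; field; rewrite gt_eqF.
have th20 : 0 < 2 * th by rewrite mulr_gt0.
have [M HM] := @esup_fin _ _ (Hsup (2 * th) th20).
set N := Num.bound (Num.sqrt (`|M| / th) / h).
have HK : Num.sqrt (`|M| / th) / h < N%:R.
  by apply: archi_boundP; rewrite divr_ge0 ?sqrtr_ge0 ?ltW.
have NM : M <= th * (N.+1%:R * h) ^+ 2.
  have s0 : 0 <= Num.sqrt (`|M| / th) := sqrtr_ge0 _.
  have s1 : Num.sqrt (`|M| / th) < N%:R * h by rewrite -ltr_pdivrMr.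
  have s2 := sqr_sqrtr (divr_ge0 (normr_ge0 M) (ltW th0)).
  have s3 : `|M| = th * (`|M| / th) by field; rewrite gt_eqF.
  move: s0 s1 s2 s3; set s := Num.sqrt _; set q := `|M| / th => s0 s1 s2 s3.
  have := ler_norm M; rewrite -natr1 => hM.
  have y1 : s <= (N%:R + 1) * h by rewrite mulrDl mul1r; lra.
  have y2 : s ^+ 2 <= ((N%:R + 1) * h) ^+ 2 by rewrite ler_sqr ?nnegrE //; lra.
  have := ler_wpM2l (ltW th0) y2; rewrite s2 -s3; lra.
set alpha := fun i : 'I_N.+1 => th * (2 * i%:R + 1) * h.
have alpha0 i : 0 < alpha i.
  rewrite /alpha; apply: mulr_gt0 => //; apply: mulr_gt0 => //; have := ler0n R i; lra.
have Hi : \forall m \near \oo, forall i : 'I_N.+1,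
    (Lsq (alpha i) m <= (rate (alpha i) + e)%:E)%E.
  by apply: filter_forall => i; apply: cvg_near_le => //; apply: Hcvg.
have Hb : \forall m \near \oo, ln (N.+2%:R) / e <= b m.
  by move/cvgryPge : b_oo; apply.
apply: esup_le_near; near=> m.
have bm0 := b_gt0 m.
set D := C0 * th `^ p + 2 * e.
have D0 : 0 <= D by rewrite addr_ge0 ?mulr_ge0 ?powR_ge0 ?ltW.
have E1 : (Eexp P (fun x => th * X m x)%R <= \sum_(i < N.+1)
   (expR (- (b m * (th * i%:R * (i%:R + 1) * h ^+ 2))))%:E *
     Eexp P (fun x => alpha i * Num.sqrt (b m) * Num.sqrt (X m x))%R
   + (expR (- (b m * (th * (N.+1%:R * h) ^+ 2))))%:E *
     Eexp P (fun x => (2 * th) * X m x)%R)%E.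
  apply: Eexp_sum_le => // x.
  have := @pointwise _ th h (Num.sqrt (b m)) (Num.sqrt (X m x)) N th0 h0
    (ltac:(by rewrite sqrtr_gt0)) (sqrtr_ge0 _).
  by rewrite !sqr_sqrtr ?(ltW bm0) // mulrA.
have Hm : forall i : 'I_N.+1, (Lsq (alpha i) m <= (rate (alpha i) + e)%:E)%E by near: m.
have Hbm : ln (N.+2%:R) / e <= b m by near: m.
have HMm : (L (2 * th)%R m <= M%:E)%E by near: m.
have term (i : 'I_N.+1) : ((expR (- (b m * (th * i%:R * (i%:R + 1) * h ^+ 2))))%:E *
     Eexp P (fun x => alpha i * Num.sqrt (b m) * Num.sqrt (X m x))%R
     <= (expR (b m * D))%:E)%E.
  have := Hm i; rewrite /Lsq /scaled_log_mgf => /scaled_ge => /(_ bm0 (ELsq1 _ _ (ltW (alpha0 i)))) Hle.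
  apply: le_trans (lee_wpmul2l _ Hle) _; first by rewrite lee_fin expR_ge0.
  rewrite -EFinM lee_fin -expRD ler_expR.
  have rl := @rate_le _ _ _ _ (alpha i) hp hC0 th0 (alpha0 i).
  have ci : th * i%:R * (i%:R + 1) * h ^+ 2 = i%:R * (i%:R + 1) * (4 * e).
    by rewrite -h2; ring.
  have ai : alpha i ^+ 2 / (4 * th) = (i%:R * (i%:R + 1) * (4 * e)) + e.
    rewrite /alpha; have -> : e = th * h ^+ 2 / 4 by rewrite h2; field.
    by field; rewrite gt_eqF.
  rewrite ci; rewrite ai in rl; rewrite /rate.
  move: rl; set r := (p + 1) / p * _ * _ => rl.
  have : r + e - i%:R * (i%:R + 1) * (4 * e) <= D by rewrite /D; lra.
  move=> h3; have := ler_wpM2l (ltW bm0) h3; lra.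
have tail : ((expR (- (b m * (th * (N.+1%:R * h) ^+ 2))))%:E *
     Eexp P (fun x => (2 * th) * X m x)%R <= (expR (b m * D))%:E)%E.
  move: HMm; rewrite /L /scaled_log_mgf => /scaled_ge => /(_ bm0 (EL1 _ _ (ltW th20))) Hle.
  apply: le_trans (lee_wpmul2l _ Hle) _; first by rewrite lee_fin expR_ge0.
  rewrite -EFinM lee_fin -expRD ler_expR.
  have := ler_wpM2l (ltW bm0) NM; have := mulr_ge0 (ltW bm0) D0; lra.
have E2 : (Eexp P (fun x => th * X m x)%R <= (expR (b m * (D + e)))%:E * 1)%E.
  apply: le_trans E1 _; rewrite mule1.
  apply: le_trans (_ : _ <= \sum_(i < N.+1) (expR (b m * D))%:E + (expR (b m * D))%:E)%E _.
    by apply: leeD => //; apply: lee_sum => i _; exact: term i.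
  rewrite sumEFin -EFinD lee_fin sumr_const card_ord -mulrSr -mulr_natl.
  rewrite (mulrDr (b m) D e) expRD [_ * expR (b m * D)]mulrC ler_wpM2l ?expR_ge0 //.
  have -> : N.+2%:R = expR (ln N.+2%:R) :> R by rewrite lnK // posrE ltr0n.
  rewrite ler_expR; move: Hbm; rewrite ler_pdivrMr // mulrC //.
have := @scaled_le _ _ _ _ _ bm0 (EL1 _ _ (ltW th0)) (lexx 1%E) E2.
rewrite /= ln1 mule0 adde0 /L /scaled_log_mgf => /le_trans; apply.
by rewrite lee_fin /D /e; lra.
Unshelve. all: by end_near.
Qed.
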